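(* Let $c \in \mathbb{Z}$ with $c \equiv 1 \pmod 4$. Fix an algebraic closure $\overline{\mathbb{Q}}_2$ of $\mathbb{Q}_2$, an element $\delta \in \overline{\mathbb{Q}}_2$ with $\delta^2 = -c$, and elements $\alpha, \beta \in \overline{\mathbb{Q}}_2$ with $\alpha^2 = -c + \delta$ and $\beta^2 = -c - \delta$. Let $L_c = \mathbb{Q}_2(\alpha,\beta)$ (the splitting field over $\mathbb{Q}_2$ of $(x^2+c)^2+c$), and let $v_\pi$ be the valuation on $L_c$ normalized so that $v_\pi(2) = 8$. Then $v_\pi(\alpha + \alpha\beta + \beta) = 6$.
   Context: For $c \equiv 1 \pmod 4$, the extension $L_c/\mathbb{Q}_2$ is totally ramified of degree $8$, so $v_\pi$ is the normalized valuation associated to a uniformizer $\pi$ of $L_c$, and $v_\pi(x) = 8 v_2(x)$ where $v_2$ is the $2$-adic valuation extended to $\overline{\mathbb{Q}}_2$. *)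

(* Defs.v *)
From HB Require Import structures.
From mathcomp Require Import all_boot all_order all_algebra.
Set Implicit Arguments. Unset Strict Implicit. Unset Printing Implicit Defensive.
Import Order.TTheory GRing.Theory Num.Theory.
Local Open Scope ring_scope.

(* A (rank one, rational-valued) valuation v on a field K, normalised by
   v 2 = 1, i.e. extending the 2-adic valuation v_2 of Q.  The value of v at 0
   (formally +oo) is irrelevant and left unconstrained. *)
Record two_adic_valuation (K : fieldType) (v : K -> rat) : Prop := {
  val_mul : forall x y : K, x != 0 -> y != 0 -> v (x * y) = v x + v y;
  val_add : forall x y : K, x != 0 -> y != 0 -> x + y != 0 ->
              Num.min (v x) (v y) <= v (x + y);
  val_two : v 2%:R = 1
}.

(* Main.v *)
Require Import Defs.
From HB Require Import structures.
From mathcomp Require Import all_boot all_order all_algebra.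
From mathcomp Require Import ring lra.
Import Order.TTheory GRing.Theory Num.Theory.
Local Open Scope ring_scope.

Section V.
Variables (K : fieldType) (v : K -> rat) (hv : two_adic_valuation v).
Hypothesis h2 : (2%:R : K) != 0.

Lemma v1 : v 1 = 0.
Proof. have := val_mul hv (oner_neq0 K) (oner_neq0 K). rewrite mulr1. lra. Qed.

Lemma vN1 : v (-1) = 0.
Proof.
have h : (-1 : K) != 0 by rewrite oppr_eq0 oner_neq0.
have := val_mul hv h h. rewrite mulrNN mulr1 v1. lra. Qed.

Lemma vN x : x != 0 -> v (- x) = v x.
Proof.
move=> hx; have h : (-1 : K) != 0 by rewrite oppr_eq0 oner_neq0.
by rewrite -mulN1r (val_mul hv h hx) vN1 add0r. Qed.

Lemma vM x y : x != 0 -> y != 0 -> v (x * y) = v x + v y.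
Proof. exact: (@val_mul _ _ hv x y). Qed.

Lemma vX2 x : x != 0 -> v (x ^+ 2) = 2 * v x.
Proof. move=> hx; rewrite expr2 vM //; lra. Qed.

Lemma add_small a b : a != 0 -> (b != 0 -> v a < v b) ->
  a + b != 0 /\ v (a + b) = v a.
Proof.
move=> ha hb; have [->|b0] := eqVneq b 0; first by rewrite addr0.
have lt := hb b0.
have hab : a + b != 0.
  apply/negP=> /eqP e; have eb : b = - a by rewrite -(addKr a b) e addr0.
  by move: lt; rewrite eb vN // ltxx.
split=> //.
have h1 := val_add hv ha b0 hab.
have e : a = (a + b) + - b by rewrite addrK.
have hnb : - b != 0 by rewrite oppr_eq0.
have h3 : (a + b) + - b != 0 by rewrite -e.
have h4 := val_add hv hab hnb h3. rewrite -e vN // in h4.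
move: h1 h4; rewrite /Num.Def.minr !ge_min => /orP[h1|h1] /orP[h4|h4]; lra.
Qed.

Definition intl (z : K) := z != 0 -> 0 <= v z.

Lemma intl_nat n : intl n%:R.
Proof.
elim: n => [|n IH]; first by rewrite /intl eqxx.
move=> hn; rewrite -natr1 in hn *.
have [e|n0] := eqVneq (n%:R : K) 0; first by rewrite e add0r v1.
have := val_add hv n0 (oner_neq0 K) hn. rewrite /Num.Def.minr ge_min v1 => h.
have := IH n0 => h'. case/orP: h => h; lra.
Qed.

Lemma intl_int (z : int) : intl z%:~R.
Proof.
case: z => n; first exact: intl_nat.
rewrite NegzE mulrNz => h; rewrite vN; last by rewrite -oppr_eq0.
apply: intl_nat; by rewrite -oppr_eq0.
Qed.

Lemma intlM x y : intl x -> intl y -> intl (x * y).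
Proof.
move=> hx hy hxy; move: (hxy); rewrite mulf_eq0 negb_or => /andP[x0 y0].
rewrite vM //; have := hx x0; have := hy y0; lra. Qed.

Lemma v2 : v 2%:R = 1. Proof. exact: val_two hv. Qed.

Lemma v4 : v 4%:R = 2.
Proof. have -> : (4%:R : K) = 2%:R * 2%:R by rewrite -natrM. rewrite vM // v2; lra. Qed.

Lemma h4 : (4%:R : K) != 0.
Proof. have -> : (4%:R : K) = 2%:R * 2%:R by rewrite -natrM. by rewrite mulf_neq0. Qed.

Lemma odd_v z : intl z -> 2%:R * z + 1 != 0 /\ v (2%:R * z + 1) = 0.
Proof.
move=> hz; rewrite addrC; have [] := (@add_small 1 (2%:R * z) (oner_neq0 K)).
  move=> hb; move: (hb); rewrite mulf_eq0 negb_or => /andP[_ z0].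
  rewrite vM // v2 v1; have := hz z0; lra.
by move=> ? ->; rewrite v1.
Qed.

End V.
Arguments v1 {K v}. Arguments vN {K v}. Arguments vM {K v}. Arguments vX2 {K v}.
Arguments add_small {K v}. Arguments intl_nat {K v}. Arguments intl_int {K v}.
Arguments intlM {K v}. Arguments v2 {K v}. Arguments v4 {K v}. Arguments odd_v {K v}.
Theorem lemma7p1 (K : closedFieldType) (v : K -> rat)
  (charK0 : [pchar K] =i pred0) (hv : two_adic_valuation v)
  (c : int) (hc : (c %% 4)%Z = 1)
  (delta alpha beta : K)
  (hdelta : delta ^+ 2 = - c%:~R)
  (halpha : alpha ^+ 2 = - c%:~R + delta)
  (hbeta : beta ^+ 2 = - c%:~R - delta) :
  alpha + alpha * beta + beta != 0 /\
  8%:R * v (alpha + alpha * beta + beta) = 6%:R.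
Proof.
have h2 : (2%:R : K) != 0 by rewrite ((pcharf0P K).1 charK0 2).
set q := (c %/ 4)%Z.
have hcq : c = q * 4 + 1 by rewrite {1}(divz_eq c 4) hc.
set Q : K := q%:~R.
set C : K := c%:~R.
have hCQ : C = Q * 4%:R + 1.
  rewrite /C /Q {1}hcq rmorphD rmorphM /=. done.
have aS := add_small hv.
have h4K : (4%:R : K) != 0 by exact: h4.
have vM' := vM hv. have vN' := vN hv.
have hQ : intl K v Q := intl_int hv q.
have hQ1 : intl K v (Q + 1).
  have -> : Q + 1 = (q + 1)%:~R by rewrite /Q intrD.
  exact: intl_int.
have [C0 vC] : C != 0 /\ v C = 0.
  have -> : C = 2%:R * (2%:R * Q) + 1 by rewrite hCQ; ring.
  apply: (odd_v hv h2). exact: (intlM hv _ _ (intl_nat hv 2) hQ).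
have [w0 vw] := odd_v hv h2 _ hQ.
have C10 : C + 1 != 0.
  have -> : C + 1 = 2%:R * (2%:R * Q + 1) by rewrite hCQ; ring.
  by rewrite mulf_neq0.
have vC1 : v (C + 1) = 1.
  have -> : C + 1 = 2%:R * (2%:R * Q + 1) by rewrite hCQ; ring.
  rewrite vM' // v2 // vw; lra.
set dp := delta + 1. set dm := delta - 1.
have edd : dp * dm = - (C + 1).
  rewrite /dp /dm; transitivity (delta ^+ 2 - 1); first by ring.
  rewrite hdelta; ring.
have : dp * dm != 0 by rewrite edd oppr_eq0.
rewrite mulf_eq0 negb_or => /andP[dp0 dm0].
have sdd : v dp + v dm = 1 by rewrite -vM' // edd vN'.
have e2 : dp + - dm = 2%:R by rewrite /dp /dm; ring.
have ndm0 : - dm != 0 by rewrite oppr_eq0.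
have [vdp vdm] : v dp = 1/2 /\ v dm = 1/2.
  case: (ltgtP (v dp) (v dm)) => h.
  - have hh : v dp < v (- dm) by rewrite vN'.
    have [_ e] := aS dp (- dm) dp0 (fun _ => hh). rewrite e2 v2 // in e. lra.
  - have hh : v (- dm) < v dp by rewrite vN'.
    have [_ e] := aS (- dm) dp ndm0 (fun _ => hh). rewrite addrC e2 v2 // vN' // in e. lra.
  - split; lra.
have small : forall a, a != 0 -> v a = 1/2 -> a + - (4%:R * Q) != 0 /\ v (a + - (4%:R * Q)) = 1/2.
  move=> a a0 va; rewrite -va; apply: (aS) => // hb.
  have hb' : 4%:R * Q != 0 by rewrite -oppr_eq0.
  move: (hb'); rewrite mulf_eq0 negb_or => /andP[_ Q0].
  rewrite vN' // vM' // v4 // va; have := hQ Q0; lra.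
have [a20 va2] : alpha ^+ 2 != 0 /\ v (alpha ^+ 2) = 1/2.
  have -> : alpha ^+ 2 = dm + - (4%:R * Q) by rewrite halpha -/C hCQ /dm; ring.
  exact: small.
have [b20 vb2] : beta ^+ 2 != 0 /\ v (beta ^+ 2) = 1/2.
  have -> : beta ^+ 2 = - dp + - (4%:R * Q) by rewrite hbeta -/C hCQ /dp; ring.
  apply: (small); by rewrite ?oppr_eq0 ?vN'.
have a0 : alpha != 0 by apply: contraNneq a20 => ->; rewrite expr2 mul0r.
have b0 : beta != 0 by apply: contraNneq b20 => ->; rewrite expr2 mul0r.
have va : v alpha = 1/4 by move: va2; rewrite vX2 //; lra.
have vb : v beta = 1/4 by move: vb2; rewrite vX2 //; lra.
set p := alpha * beta.
have p0 : p != 0 by rewrite mulf_neq0.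
have p20 : 2%:R * p != 0 by rewrite mulf_neq0.
have vp2 : v (2%:R * p) = 3/2 by rewrite vM' // v2 // vM' // va vb; lra.
set x := alpha + alpha * beta + beta.
set y := alpha + beta - alpha * beta.
have eab : alpha ^+ 2 * beta ^+ 2 = C ^+ 2 + C.
  rewrite halpha hbeta -/C; transitivity (C ^+ 2 - delta ^+ 2); first by ring.
  rewrite hdelta -/C; ring.
have exy : x * y = 2%:R * p + - (4%:R * C * (Q + 1)).
  transitivity (alpha ^+ 2 + beta ^+ 2 + 2%:R * p - alpha ^+ 2 * beta ^+ 2).
    by rewrite /x /y /p; ring.
  rewrite eab halpha hbeta -/C; rewrite hCQ; ring.
have [xy0 vxy] : x * y != 0 /\ v (x * y) = 3/2.
  rewrite exy -vp2; apply: (aS) => // hb.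
  have hb' : 4%:R * C * (Q + 1) != 0 by rewrite -oppr_eq0.
  move: (hb'); rewrite !mulf_eq0 !negb_or => /andP[/andP[_ _] Q10].
  rewrite vN' // (vM' (4%:R * C)) ?mulf_neq0 // (vM' 4%:R C) // v4 // vC vp2; have := hQ1 Q10; lra.
move: (xy0); rewrite mulf_eq0 negb_or => /andP[x0 y0].
have sxy : v x + v y = 3/2 by rewrite -vM'.
have ny0 : - y != 0 by rewrite oppr_eq0.
have exy2 : x + - y = 2%:R * p by rewrite /x /y /p; ring.
split => //.
case: (ltgtP (v x) (v y)) => h.
- have hh : v x < v (- y) by rewrite vN'.
  have [_ e] := aS x (- y) x0 (fun _ => hh). rewrite exy2 vp2 in e. lra.
- have hh : v (- y) < v x by rewrite vN'.
  have [_ e] := aS (- y) x ny0 (fun _ => hh). rewrite addrC exy2 vp2 vN' // in e. lra.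
- lra.
Qed.
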